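(* Let $a\in\mathbb Z^3$ and $A,N\ge1$ with $|a|\sim A$. Then for either choice of sign $\pm$, $$\sup_{m\in\mathbb Z}\#\{n\in\mathbb Z^3:|n|\sim N,\ |\langle a+n\rangle\pm\langle n\rangle-m|\lesssim1\}\lesssim\min(A,N)^{-1}N^3.$$
   Context: $\langle n\rangle=(1+|n|^2)^{1/2}$. ''$|x|\sim N$'' means $c^{-1}N\le|x|\le cN$ for a fixed absolute constant $c$ (and $|x|\le c$ when the scale is $1$); ''$\lesssim1$'' inside the set means bounded by a fixed absolute constant. Implicit constants are absolute. *)

(* Defs.v *)
From Stdlib Require Import Reals Lra Lia ZArith List.
Open Scope R_scope.

Definition Z3 : Type := (Z * Z * Z)%type.

Definition z3add (a n : Z3) : Z3 :=
  match a, n with (a1, a2, a3), (n1, n2, n3) => ((a1 + n1)%Z, (a2 + n2)%Z, (a3 + n3)%Z) end.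

Definition z3norm (n : Z3) : R :=
  match n with (n1, n2, n3) => sqrt (IZR n1 ^ 2 + IZR n2 ^ 2 + IZR n3 ^ 2) end.

Definition jbr (n : Z3) : R := sqrt (1 + z3norm n ^ 2).

Definition sim (c x N : R) : Prop :=
  (N = 1 -> x <= c) /\ (N <> 1 -> / c * N <= x <= c * N).

(* "#S <= K": every duplicate-free list of elements of S has length at most K. *)
Definition card_le (S : Z3 -> Prop) (K : R) : Prop :=
  forall l : list Z3, NoDup l -> (forall n, In n l -> S n) -> INR (length l) <= K.

(* Main.v *)
Require Import Defs.
From Stdlib Require Import Reals List Lra Lia ZArith Psatz.
Open Scope R_scope.

Definition cle {T : Type} (S : T -> Prop) (K : R) : Prop :=
  forall l : list T, NoDup l -> (forall n, In n l -> S n) -> INR (length l) <= K.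

Lemma cle_mono {T} (S S' : T -> Prop) K K' :
  (forall x, S x -> S' x) -> K' <= K -> cle S' K' -> cle S K.
Proof.
  intros H HK H' l Hl Hin. eapply Rle_trans; [apply H'; auto|lra].
Qed.

Lemma NoDup_map_inj {A B} (f : A -> B) (P : A -> Prop) l :
  NoDup l -> (forall x, In x l -> P x) ->
  (forall x y, P x -> P y -> f x = f y -> x = y) -> NoDup (map f l).
Proof.
  induction l as [|x l IH]; intros Hl Hin Hinj; simpl; constructor.
  - inversion Hl; subst. intro Hm. apply in_map_iff in Hm.
    destruct Hm as [y [Hy1 Hy2]].
    assert (y = x) by (apply Hinj; auto; apply Hin; simpl; auto). subst; auto.
  - inversion Hl; subst. apply IH; auto. intros; apply Hin; simpl; auto.
Qed.

Lemma cle_inj {A B} (S : A -> Prop) (S' : B -> Prop) (f : A -> B) K :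
  (forall x, S x -> S' (f x)) -> (forall x y, S x -> S y -> f x = f y -> x = y) ->
  cle S' K -> cle S K.
Proof.
  intros Hm Hi H l Hl Hin.
  rewrite <- (length_map f). apply H.
  - eapply NoDup_map_inj; eauto.
  - intros y Hy. apply in_map_iff in Hy. destruct Hy as [x [<- Hx]]. auto.
Qed.

Lemma cle_empty {T} (S : T -> Prop) K : 0 <= K -> (forall x, ~ S x) -> cle S K.
Proof.
  intros HK H l Hl Hin. destruct l as [|x l]. simpl; lra.
  exfalso; apply (H x), Hin; simpl; auto.
Qed.

Fixpoint sm (f : nat -> R) (n : nat) : R :=
  match n with O => 0 | S k => sm f k + f k end.

Lemma sm_ext f g n : (forall j, (j < n)%nat -> f j = g j) -> sm f n = sm g n.
Proof. induction n; intros H; simpl; auto. rewrite IHn, H; auto. Qed.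

Lemma sm_le f g n : (forall j, (j < n)%nat -> f j <= g j) -> sm f n <= sm g n.
Proof. induction n; intros H; simpl. lra. apply Rplus_le_compat; auto. Qed.

Lemma sm_const c n : sm (fun _ => c) n = INR n * c.
Proof. induction n; simpl sm; [simpl; ring|]. rewrite IHn, S_INR. ring. Qed.

Lemma sm_lin f g a b n : sm (fun j => a * f j + b * g j) n = a * sm f n + b * sm g n.
Proof. induction n; simpl; [ring|]. rewrite IHn. ring. Qed.

Lemma sm_plus f g n : sm (fun j => f j + g j) n = sm f n + sm g n.
Proof. induction n; simpl; [ring|]. rewrite IHn. ring. Qed.

Lemma sm_scal f a n : sm (fun j => a * f j) n = a * sm f n.
Proof. induction n; simpl; [ring|]. rewrite IHn. ring. Qed.

Lemma sm_head f n : sm f (S n) = f O + sm (fun j => f (S j)) n.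
Proof. induction n; simpl in *; [ring|]. rewrite IHn. ring. Qed.

Lemma sm_rev f n : sm (fun j => f (n - j)%nat) (S n) = sm f (S n).
Proof.
  revert f; induction n; intros f.
  - simpl. ring.
  - rewrite (sm_head f (S n)). change (sm (fun j => f (S n - j)%nat) (S n) + f (S n - S n)%nat = f 0%nat + sm (fun j => f (S j)) (S n)).
    replace (S n - S n)%nat with O by lia.
    rewrite (sm_ext (fun j => f (S n - j)%nat) (fun j => (fun i => f (S i)) (n - j)%nat)).
    + rewrite (IHn (fun i => f (S i))). ring.
    + intros j Hj. f_equal. lia.
Qed.

Lemma sm_nonneg f n : (forall j, (j < n)%nat -> 0 <= f j) -> 0 <= sm f n.
Proof. intros H. replace 0 with (sm (fun _ => 0) n) by (rewrite sm_const; ring). apply sm_le; auto. Qed.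

Lemma sqrt_step (n : nat) : 2 * sqrt (INR n) + / sqrt (INR (S n)) <= 2 * sqrt (INR (S n)).
Proof.
  set (x := sqrt (INR n)). set (y := sqrt (INR (S n))).
  assert (Hx : 0 <= x) by apply sqrt_pos.
  assert (Hy2 : y * y = x * x + 1).
  { unfold x, y. rewrite !sqrt_sqrt; [rewrite S_INR; ring| |]; try apply pos_INR;
    rewrite S_INR; pose proof (pos_INR n); lra. }
  assert (Hy : 0 < y) by (unfold y; apply sqrt_lt_R0; rewrite S_INR; pose proof (pos_INR n); lra).
  assert (Hxy : x <= y) by nra.
  assert (H1 : 1 <= 2 * y * (y - x)) by nra.
  assert (/ y <= 2 * (y - x)).
  { apply Rmult_le_reg_l with y; auto. rewrite Rinv_r by lra. nra. }
  lra.
Qed.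

Lemma sum_inv_sqrt n : sm (fun j => / sqrt (INR (S j))) n <= 2 * sqrt (INR n).
Proof.
  induction n.
  - simpl. rewrite sqrt_0. lra.
  - change (sm (fun j => / sqrt (INR (S j))) n + / sqrt (INR (S n)) <= 2 * sqrt (INR (S n))).
    pose proof (sqrt_step n). lra.
Qed.

Lemma fiber {T} (P : T -> Prop) (key : T -> Z) (lo : Z) (M : nat) (B : nat -> R) :
  (forall x, P x -> (lo <= key x <= lo + Z.of_nat M)%Z) ->
  (forall j, (j <= M)%nat -> cle (fun x => P x /\ key x = (lo + Z.of_nat j)%Z) (B j)) ->
  cle P (sm B (S M)).
Proof.
  revert P; induction M; intros P Hr Hb l Hl Hin.
  - simpl sm. rewrite Rplus_0_l. apply (Hb O); auto. intros x Hx; split; auto.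
    specialize (Hr x (Hin x Hx)). simpl in *. lia.
  - set (f := fun x => Z.eqb (key x) (lo + Z.of_nat (S M))).
    rewrite <- (filter_length f l), plus_INR.
    change (sm B (S (S M))) with (sm B (S M) + B (S M)).
    rewrite Rplus_comm. apply Rplus_le_compat.
    + apply (IHM (fun x => P x /\ key x <> (lo + Z.of_nat (S M))%Z)).
      * intros x [Hx Hk]. specialize (Hr x Hx). lia.
      * intros j Hj. eapply cle_mono; [| apply Rle_refl | apply (Hb j); lia].
        simpl; tauto.
      * apply NoDup_filter; auto.
      * intros x Hx. apply filter_In in Hx. destruct Hx as [Hx Hf].
        split; auto. unfold f in Hf. apply Bool.negb_true_iff, Z.eqb_neq in Hf. auto.
    + apply (Hb (S M)); auto. apply NoDup_filter; auto.
      intros x Hx. apply filter_In in Hx. destruct Hx as [Hx Hf].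
      split; auto. unfold f in Hf. apply Z.eqb_eq in Hf. auto.
Qed.

Definition flr (x : R) : Z := Int_part x.
Lemma flr_le x : IZR (flr x) <= x.
Proof. apply base_Int_part. Qed.
Lemma flr_gt x : x < IZR (flr x) + 1.
Proof. unfold flr. pose proof (base_Int_part x). lra. Qed.
Lemma int_le_flr (z : Z) x : IZR z <= x -> (z <= flr x)%Z.
Proof.
  intros H. pose proof (flr_gt x). assert (IZR z < IZR (flr x + 1)) by (rewrite plus_IZR; change (IZR 1) with 1; lra).
  apply lt_IZR in H1. lia.
Qed.
Definition cil (x : R) : Z := (- flr (- x))%Z.
Lemma cil_ge x : x <= IZR (cil x).
Proof. unfold cil. rewrite opp_IZR. pose proof (flr_le (-x)). lra. Qed.
Lemma int_ge_cil (z : Z) x : x <= IZR z -> (cil x <= z)%Z.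
Proof. intros H. unfold cil. assert (IZR (- z) <= - x) by (rewrite opp_IZR; lra).
  apply int_le_flr in H0. lia. Qed.

Lemma int_eq_of_close (z z' : Z) : Rabs (IZR z - IZR z') < 1 -> z = z'.
Proof.
  intros H. rewrite <- minus_IZR in H. apply Rabs_def2 in H. destruct H as [H1 H2].
  change 1 with (IZR 1) in H1. change (- IZR 1) with (IZR (-1)) in H2.
  apply lt_IZR in H1. apply lt_IZR in H2. lia.
Qed.

Lemma count_int_interval (l : list Z) x y : x <= y -> NoDup l ->
  (forall v, In v l -> x <= IZR v <= y) -> INR (length l) <= y - x + 1.
Proof.
  intros Hxy Hl Hin.
  set (p := cil x). set (q := flr y).
  set (l' := map (fun i => (p + Z.of_nat i)%Z) (seq 0 (Z.to_nat (q - p + 1)))).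
  assert (Hinc : incl l l').
  { intros v Hv. destruct (Hin v Hv) as [H1 H2].
    apply int_ge_cil in H1. apply int_le_flr in H2. fold p in H1. fold q in H2.
    unfold l'. apply in_map_iff. exists (Z.to_nat (v - p)). split. lia.
    apply in_seq. lia. }
  pose proof (NoDup_incl_length Hl Hinc) as Hlen.
  unfold l' in Hlen. rewrite length_map, length_seq in Hlen.
  apply le_INR in Hlen. eapply Rle_trans; [apply Hlen|].
  pose proof (cil_ge x). pose proof (flr_le y). fold p q in H, H0.
  destruct (Z_lt_le_dec (q - p + 1) 0).
  - replace (Z.to_nat (q - p + 1)) with 0%nat by lia. simpl. lra.
  - rewrite INR_IZR_INZ, Z2Nat.id by lia. rewrite !plus_IZR, minus_IZR. simpl. lra.
Qed.

Lemma sqrt_maxle X1 X2 : X1 <= X2 -> sqrt (Rmax X1 0) <= sqrt X2.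
Proof.
  intros H. destruct (Rle_dec 0 X2).
  - apply sqrt_le_1_alt. unfold Rmax; destruct (Rle_dec X1 0); lra.
  - unfold Rmax; destruct (Rle_dec X1 0); [|lra]. rewrite sqrt_0. apply sqrt_pos.
Qed.

Lemma sqrt_bounds_of_sq d X1 X2 : 0 <= d -> X1 <= d ^ 2 <= X2 ->
  sqrt (Rmax X1 0) <= d <= sqrt X2.
Proof.
  intros Hd [H1 H2]. rewrite <- (sqrt_pow2 d Hd). split; apply sqrt_le_1_alt; auto.
  unfold Rmax; destruct (Rle_dec X1 0); nra.
Qed.

Lemma count_quad (l : list Z) c X1 X2 : X1 <= X2 -> NoDup l ->
  (forall v, In v l -> X1 <= (IZR v - c) ^ 2 <= X2) ->
  INR (length l) <= 2 * (sqrt X2 - sqrt (Rmax X1 0)) + 2.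
Proof.
  intros H12 Hl Hin.
  set (f := fun v : Z => if Rle_dec c (IZR v) then true else false).
  rewrite <- (filter_length f l), plus_INR.
  pose proof (sqrt_maxle X1 X2 H12).
  assert (INR (length (filter f l)) <= (c + sqrt X2) - (c + sqrt (Rmax X1 0)) + 1).
  { apply count_int_interval; [lra|apply NoDup_filter; auto|].
    intros v Hv. apply filter_In in Hv. destruct Hv as [Hv Hf]. unfold f in Hf.
    destruct (Rle_dec c (IZR v)); [|discriminate].
    pose proof (sqrt_bounds_of_sq (IZR v - c) X1 X2 ltac:(lra) (Hin v Hv)). lra. }
  assert (INR (length (filter (fun x => negb (f x)) l)) <= (c - sqrt (Rmax X1 0)) - (c - sqrt X2) + 1).
  { apply count_int_interval; [lra|apply NoDup_filter; auto|].
    intros v Hv. apply filter_In in Hv. destruct Hv as [Hv Hf]. unfold f in Hf.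
    destruct (Rle_dec c (IZR v)); [discriminate|].
    assert (E : (IZR v - c) ^ 2 = (c - IZR v) ^ 2) by ring.
    pose proof (Hin v Hv) as Hq. rewrite E in Hq.
    pose proof (sqrt_bounds_of_sq (c - IZR v) X1 X2 ltac:(lra) Hq). lra. }
  lra.
Qed.

Lemma sqrt_diff_le1 X1 X2 : X1 <= X2 -> sqrt X2 - sqrt (Rmax X1 0) <= sqrt (X2 - X1).
Proof.
  intros H. unfold Rmax. destruct (Rle_dec X1 0).
  - rewrite sqrt_0. assert (sqrt X2 <= sqrt (X2 - X1)) by (apply sqrt_le_1_alt; lra). lra.
  - assert (0 < X1) by lra.
    assert (sqrt X2 <= sqrt X1 + sqrt (X2 - X1)); [|lra].
    pose proof (sqrt_pos X1). pose proof (sqrt_pos (X2 - X1)).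
    rewrite <- (sqrt_pow2 (sqrt X1 + sqrt (X2 - X1))) by lra.
    apply sqrt_le_1_alt.
    pose proof (sqrt_sqrt X1 ltac:(lra)). pose proof (sqrt_sqrt (X2 - X1) ltac:(lra)). nra.
Qed.

Lemma sqrt_diff_le2 X1 X2 : X1 <= X2 -> 0 < X2 ->
  sqrt X2 - sqrt (Rmax X1 0) <= (X2 - X1) / sqrt X2.
Proof.
  intros H H2. pose proof (sqrt_lt_R0 X2 H2) as Hs. pose proof (sqrt_sqrt X2 ltac:(lra)).
  unfold Rmax. destruct (Rle_dec X1 0).
  - rewrite sqrt_0. apply Rmult_le_reg_r with (sqrt X2); auto.
    unfold Rdiv. rewrite Rmult_assoc, Rinv_l by lra. nra.
  - pose proof (sqrt_pos X1). pose proof (sqrt_sqrt X1 ltac:(lra)).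
    apply Rmult_le_reg_r with (sqrt X2); auto.
    unfold Rdiv. rewrite Rmult_assoc, Rinv_l by lra. nra.
Qed.

Definition PP (b1 b2 k0 u v : R) : R := u ^ 2 + v ^ 2 + (k0 - b1 * u - b2 * v) ^ 2.

Definition gfun (D rho : R) (j : nat) : R :=
  match j with O => sqrt D | S _ => sqrt 2 * D / sqrt (rho * INR j) end.

Lemma sum_g_bound D rho M : 0 <= D -> (INR M <= 2 * rho) ->
  sm (gfun D rho) (S M) <= sqrt D + 4 * D.
Proof.
  intros HD HM. rewrite sm_head. unfold gfun.
  destruct M as [|M'].
  - simpl. lra.
  - set (M := S M') in *.
    assert (Hr : 0 < rho) by (unfold M in HM; rewrite S_INR in HM; pose proof (pos_INR M'); lra).
    pose proof (sqrt_lt_R0 rho Hr) as Hsr.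
    rewrite (sm_ext _ (fun j => (sqrt 2 * D / sqrt rho) * / sqrt (INR (S j)))).
    2:{ intros j _. rewrite sqrt_mult_alt by lra.
        assert (0 < sqrt (INR (S j))) by (apply sqrt_lt_R0; rewrite S_INR; pose proof (pos_INR j); lra).
        field; split; lra. }
    rewrite sm_scal.
    pose proof (sum_inv_sqrt M).
    assert (sqrt (INR M) <= sqrt 2 * sqrt rho).
    { rewrite <- sqrt_mult_alt by lra. apply sqrt_le_1_alt. lra. }
    assert (0 <= sqrt 2 * D / sqrt rho).
    { unfold Rdiv. apply Rmult_le_pos. apply Rmult_le_pos; auto; apply sqrt_pos.
      apply Rlt_le, Rinv_0_lt_compat; auto. }
    assert (sqrt 2 * D / sqrt rho * sm (fun j => / sqrt (INR (S j))) M <= sqrt 2 * D / sqrt rho * (2 * (sqrt 2 * sqrt rho))).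
    { apply Rmult_le_compat_l; auto. lra. }
    assert (E : sqrt 2 * D / sqrt rho * (2 * (sqrt 2 * sqrt rho)) = 4 * D).
    { pose proof (sqrt_sqrt 2 ltac:(lra)). field_simplify; [|lra]. nra. }
    lra.
Qed.

Lemma gfun_nonneg D rho j : 0 <= D -> 0 <= gfun D rho j.
Proof.
  intros HD. destruct j; simpl. apply sqrt_pos.
  unfold Rdiv. apply Rmult_le_pos. apply Rmult_le_pos; auto; apply sqrt_pos.
  set (q := sqrt _). destruct (Req_dec q 0) as [E|E].
  - rewrite E, Rinv_0. lra.
  - apply Rlt_le, Rinv_0_lt_compat. assert (0 <= q) by apply sqrt_pos. lra.
Qed.

Lemma gbound X1 X2 D al rho jj : X1 <= X2 -> X2 - X1 = D / al -> 1 <= al -> 0 <= D ->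
  INR jj <= rho -> rho * INR jj <= 2 * X2 ->
  sqrt X2 - sqrt (Rmax X1 0) <= gfun D rho jj.
Proof.
  intros H12 HD Hal HD0 Hj Hx.
  assert (HDa : D / al <= D).
  { unfold Rdiv. apply Rmult_le_reg_r with al; [lra|]. rewrite Rmult_assoc, Rinv_l by lra. nra. }
  assert (HDa0 : 0 <= D / al) by (unfold Rdiv; apply Rmult_le_pos; [lra|apply Rlt_le, Rinv_0_lt_compat; lra]).
  destruct jj as [|k].
  - simpl. pose proof (sqrt_diff_le1 X1 X2 H12). rewrite HD in H.
    pose proof (sqrt_le_1_alt _ _ HDa). lra.
  - unfold gfun. set (J := INR (S k)) in *.
    assert (HJ : 1 <= J) by (unfold J; rewrite S_INR; pose proof (pos_INR k); lra).
    assert (Hr : 0 < rho) by lra.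
    assert (HX2 : 0 < X2) by nra.
    pose proof (sqrt_diff_le2 X1 X2 H12 HX2). rewrite HD in H.
    pose proof (sqrt_lt_R0 _ HX2) as Hs2.
    assert (Hs : 0 < sqrt (rho * J)) by (apply sqrt_lt_R0; nra).
    assert (Hc : sqrt (rho * J) <= sqrt 2 * sqrt X2).
    { rewrite <- sqrt_mult_alt by lra. apply sqrt_le_1_alt. lra. }
    assert (D / al / sqrt X2 <= D / sqrt X2).
    { unfold Rdiv. apply Rmult_le_compat_r. apply Rlt_le, Rinv_0_lt_compat; auto. exact HDa. }
    assert (D / sqrt X2 <= sqrt 2 * D / sqrt (rho * J)).
    { apply Rmult_le_reg_r with (sqrt X2 * sqrt (rho * J)). nra.
      replace (D / sqrt X2 * (sqrt X2 * sqrt (rho * J))) with (D * sqrt (rho * J)) by (field; lra).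
      replace (sqrt 2 * D / sqrt (rho * J) * (sqrt X2 * sqrt (rho * J))) with (D * (sqrt 2 * sqrt X2)) by (field; lra).
      apply Rmult_le_compat_l; auto. }
    lra.
Qed.

Lemma count_ellipse b1 b2 k0 Lo Up :
  -1 <= b1 <= 1 -> -1 <= b2 <= 1 -> Lo <= Up ->
  cle (fun w : Z * Z => Lo <= PP b1 b2 k0 (IZR (fst w)) (IZR (snd w)) <= Up)
      (16 * (Up - Lo) + 4 * sqrt (Up - Lo) + 4 * sqrt (Rmax Up 0) + 2).
Proof.
  intros Hb1 Hb2 HLU.
  set (D := Up - Lo).
  assert (HD : 0 <= D) by (unfold D; lra).
  set (al := 1 + b2 ^ 2). set (sg := 1 + b1 ^ 2 + b2 ^ 2).
  assert (Hal : 1 <= al <= 2) by (unfold al; nra).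
  assert (Hsg : al <= sg) by (unfold sg, al; nra).
  set (mu := sg / al). set (us := k0 * b1 / sg). set (ms := k0 ^ 2 / sg).
  set (vs := fun u => b2 * (k0 - b1 * u) / al).
  assert (Hid : forall u v, PP b1 b2 k0 u v = al * (v - vs u) ^ 2 + mu * (u - us) ^ 2 + ms).
  { intros u v. unfold PP, vs, mu, us, ms, sg, al. field. split; nra. }
  assert (Hmu : 1 <= mu).
  { unfold mu. apply Rmult_le_reg_r with al; [lra|]. unfold Rdiv. rewrite Rmult_assoc, Rinv_l by lra. lra. }
  assert (Hmual : 1 / 2 <= mu / al).
  { unfold mu. apply Rmult_le_reg_r with (al * al); [nra|].
    replace (sg / al / al * (al * al)) with sg by (field; lra). nra. }
  assert (Hms : 0 <= ms) by (unfold ms; unfold Rdiv; apply Rmult_le_pos; [nra|apply Rlt_le, Rinv_0_lt_compat; lra]).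
  assert (Hbnd0 : 0 <= 16 * D + 4 * sqrt D + 4 * sqrt (Rmax Up 0) + 2)
    by (pose proof (sqrt_pos D); pose proof (sqrt_pos (Rmax Up 0)); lra).
  fold D.
  destruct (Rlt_dec Up ms) as [Hlt|Hge].
  { apply cle_empty; auto. intros w [_ H]. rewrite Hid in H.
    assert (0 <= al * (IZR (snd w) - vs (IZR (fst w))) ^ 2) by (apply Rmult_le_pos; [lra|apply pow2_ge_0]).
    assert (0 <= mu * (IZR (fst w) - us) ^ 2) by (apply Rmult_le_pos; [lra|apply pow2_ge_0]). lra. }
  assert (Hge' : ms <= Up) by lra. clear Hge.
  set (rho := sqrt ((Up - ms) / mu)).
  assert (Hq0 : 0 <= (Up - ms) / mu) by (unfold Rdiv; apply Rmult_le_pos; [lra|apply Rlt_le, Rinv_0_lt_compat; lra]).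
  assert (Hrho2 : rho * rho = (Up - ms) / mu) by (apply sqrt_sqrt; auto).
  assert (Hrho0 : 0 <= rho) by apply sqrt_pos.
  assert (Hrho_le : rho <= sqrt (Rmax Up 0)).
  { apply sqrt_le_1_alt. unfold Rmax. destruct (Rle_dec Up 0); [|].
    - assert (E0 : Up - ms = 0) by lra. rewrite E0. unfold Rdiv. rewrite Rmult_0_l. lra.
    - apply Rmult_le_reg_r with mu; [lra|]. unfold Rdiv. rewrite Rmult_assoc, Rinv_l by lra. nra. }
  assert (Hpt : forall w : Z * Z, Lo <= PP b1 b2 k0 (IZR (fst w)) (IZR (snd w)) <= Up ->
                 us - rho <= IZR (fst w) <= us + rho).
  { intros w [_ H]. rewrite Hid in H.
    assert (0 <= al * (IZR (snd w) - vs (IZR (fst w))) ^ 2) by (apply Rmult_le_pos; [lra|apply pow2_ge_0]).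
    assert (Hd : (IZR (fst w) - us) ^ 2 <= rho * rho).
    { rewrite Hrho2. apply Rmult_le_reg_r with mu; [lra|]. unfold Rdiv. rewrite Rmult_assoc, Rinv_l by lra. lra. }
    split; nra. }
  set (lo := cil (us - rho)). set (hi := flr (us + rho)).
  destruct (Z_lt_le_dec hi lo) as [Hhl|Hhl].
  { apply cle_empty; auto. intros w Hw. destruct (Hpt w Hw) as [H1 H2].
    apply int_ge_cil in H1. apply int_le_flr in H2. fold lo in H1. fold hi in H2. lia. }
  set (M := Z.to_nat (hi - lo)).
  assert (HM : Z.of_nat M = (hi - lo)%Z) by (unfold M; lia).
  assert (HloR : us - rho <= IZR lo) by apply cil_ge.
  assert (HhiR : IZR hi <= us + rho) by apply flr_le.
  assert (HMR : INR M = IZR hi - IZR lo) by (rewrite INR_IZR_INZ, HM, minus_IZR; auto).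
  assert (HM2 : INR M <= 2 * rho) by lra.
  eapply cle_mono; [intros x Hx; exact Hx| |].
  2:{ apply (fiber _ (fun w => fst w) lo M (fun j => 2 * (gfun D rho j + gfun D rho (M - j)) + 2)).
      - intros w Hw. destruct (Hpt w Hw) as [H1 H2].
        apply int_ge_cil in H1. apply int_le_flr in H2. fold lo in H1. fold hi in H2. lia.
      - intros j Hj.
        set (u := IZR (lo + Z.of_nat j)).
        set (X1 := (Lo - mu * (u - us) ^ 2 - ms) / al).
        set (X2 := (Up - mu * (u - us) ^ 2 - ms) / al).
        assert (H12 : X1 <= X2).
        { unfold X1, X2, Rdiv. apply Rmult_le_compat_r; [apply Rlt_le, Rinv_0_lt_compat; lra|lra]. }
        assert (HX : X2 - X1 = D / al) by (unfold X1, X2, D; field; lra).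
        apply (cle_inj _ (fun v : Z => X1 <= (IZR v - vs u) ^ 2 <= X2) (fun w => snd w)).
        + intros w [Hw Hk]. rewrite Hk in Hw. fold u in Hw. rewrite Hid in Hw.
          unfold X1, X2. split.
          * apply Rmult_le_reg_r with al; [lra|]. unfold Rdiv. rewrite Rmult_assoc, Rinv_l by lra. lra.
          * apply Rmult_le_reg_r with al; [lra|]. unfold Rdiv. rewrite Rmult_assoc, Rinv_l by lra. lra.
        + intros [x1 x2] [y1 y2] [_ Hx] [_ Hy] Hs. simpl in *. f_equal; congruence.
        + intros l Hl Hin. eapply Rle_trans; [apply (count_quad l (vs u) X1 X2); auto|].
          assert (Hu : us - rho <= u <= us + rho).
          { unfold u. rewrite plus_IZR, <- INR_IZR_INZ. pose proof (pos_INR j). split. lra.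
            assert (INR j <= INR M) by (apply le_INR; auto). lra. }
          assert (HjM : INR (M - j) = INR M - INR j) by (rewrite minus_INR; auto).
          assert (Hjx : forall jj, INR jj <= rho - Rabs (u - us) -> sqrt X2 - sqrt (Rmax X1 0) <= gfun D rho jj).
          { intros jj Hjj. apply (gbound X1 X2 D al rho jj); auto; try lra.
            - pose proof (Rabs_pos (u - us)). lra.
            - pose proof (Rabs_pos (u - us)) as Ha.
              assert (Ed : (u - us) ^ 2 = Rabs (u - us) ^ 2) by (rewrite pow2_abs; auto).
              assert (Hj0 : 0 <= INR jj) by apply pos_INR.
              assert (H1 : rho * INR jj <= rho * rho - (u - us) ^ 2) by (rewrite Ed; nra).
              assert (EX : X2 = (mu / al) * (rho * rho - (u - us) ^ 2)) by (unfold X2; rewrite Hrho2; field; lra).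
              rewrite EX. assert (HY : 0 <= rho * rho - (u - us) ^ 2) by nra.
              assert (0 <= (2 * (mu / al) - 1) * (rho * rho - (u - us) ^ 2)) by (apply Rmult_le_pos; lra).
              lra. }
          pose proof (gfun_nonneg D rho j HD). pose proof (gfun_nonneg D rho (M - j) HD).
          destruct (Rle_dec u us).
          * assert (sqrt X2 - sqrt (Rmax X1 0) <= gfun D rho j).
            { apply Hjx. rewrite Rabs_left1 by lra. unfold u in *. rewrite plus_IZR, <- INR_IZR_INZ in *. lra. }
            lra.
          * assert (sqrt X2 - sqrt (Rmax X1 0) <= gfun D rho (M - j)).
            { apply Hjx. rewrite Rabs_right by lra. rewrite HjM. unfold u in *. rewrite plus_IZR, <- INR_IZR_INZ in *. lra. }
            lra. }
  rewrite (sm_ext _ (fun j => 2 * gfun D rho j + 2 * gfun D rho (M - j) + 2)) by (intros; ring).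
  rewrite !sm_plus, !sm_scal, sm_const.
  rewrite (sm_rev (gfun D rho) M).
  pose proof (sum_g_bound D rho M HD HM2). rewrite S_INR. lra.
Qed.

Definition px1 (p : Z3) : Z := fst (fst p).
Definition px2 (p : Z3) : Z := snd (fst p).
Definition px3 (p : Z3) : Z := snd p.
Definition sq3 (p : Z3) : R := IZR (px1 p) ^ 2 + IZR (px2 p) ^ 2 + IZR (px3 p) ^ 2.

Lemma sqrt_le_lin x y : 0 <= y -> x <= y ^ 2 -> sqrt x <= y.
Proof. intros Hy H. rewrite <- (sqrt_pow2 y Hy). apply sqrt_le_1_alt; auto. Qed.

Lemma ellipse_bound R : 0 <= R ->
  16 * ((R ^ 2 + 4 * R + 4) - (R ^ 2 - 2 * R - 2)) + 4 * sqrt ((R ^ 2 + 4 * R + 4) - (R ^ 2 - 2 * R - 2))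
  + 4 * sqrt (Rmax (R ^ 2 + 4 * R + 4) 0) + 2 <= 122 * (R + 1).
Proof.
  intros HR.
  assert (sqrt ((R ^ 2 + 4 * R + 4) - (R ^ 2 - 2 * R - 2)) <= 3 * R + 4) by (apply sqrt_le_lin; nra).
  assert (sqrt (Rmax (R ^ 2 + 4 * R + 4) 0) <= R + 2).
  { apply sqrt_le_lin. lra. unfold Rmax; destruct (Rle_dec _ _); nra. }
  lra.
Qed.

Lemma count_core R b1 b2 ka L : 0 <= R -> -1 <= b1 <= 1 -> -1 <= b2 <= 1 -> 0 <= L ->
  cle (fun p : Z3 => R ^ 2 <= sq3 p <= (R + 1) ^ 2 /\
         ka - b1 * IZR (px1 p) - b2 * IZR (px2 p) <= IZR (px3 p) <=
         ka - b1 * IZR (px1 p) - b2 * IZR (px2 p) + L)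
      ((L + 1) * (122 * (R + 1))).
Proof.
  intros HR Hb1 Hb2 HL.
  set (T0 := fun p : Z3 => ka - b1 * IZR (px1 p) - b2 * IZR (px2 p)).
  set (M := Z.to_nat (flr L)).
  assert (HfL : (0 <= flr L)%Z) by (apply int_le_flr; simpl; lra).
  assert (HM : Z.of_nat M = flr L) by (unfold M; lia).
  eapply cle_mono; [intros x Hx; exact Hx| |].
  2:{ apply (fiber _ (fun p => flr (IZR (px3 p) - T0 p)) 0 M (fun _ => 122 * (R + 1))).
      - intros p [_ [H1 H2]]. fold (T0 p) in H1, H2. split.
        + apply int_le_flr. simpl. lra.
        + rewrite HM. simpl. apply int_le_flr.
          pose proof (flr_le (IZR (px3 p) - T0 p)). pose proof (flr_le L). lra.
      - intros j Hj.
        eapply cle_mono; [intros x Hx; exact Hx| apply (ellipse_bound R HR) |].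
        apply (cle_inj _ (fun w : Z * Z => R ^ 2 - 2 * R - 2 <= PP b1 b2 (ka + INR j) (IZR (fst w)) (IZR (snd w)) <= R ^ 2 + 4 * R + 4) (fun p => fst p)).
        + intros p [[[H1 H2] [H3 H4]] Hk]. simpl in Hk.
          assert (Hk' : IZR (flr (IZR (px3 p) - T0 p)) = INR j) by (rewrite Hk, INR_IZR_INZ; auto).
          pose proof (flr_le (IZR (px3 p) - T0 p)). pose proof (flr_gt (IZR (px3 p) - T0 p)).
          rewrite Hk' in H, H0.
          set (s := IZR (px3 p) - T0 p - INR j).
          assert (Hs : 0 <= s < 1) by (unfold s; lra).
          unfold PP. fold (px1 p) (px2 p).
          replace (ka + INR j - b1 * IZR (px1 p) - b2 * IZR (px2 p)) with (IZR (px3 p) - s)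
            by (unfold s, T0; ring).
          unfold sq3 in *.
          assert (Ht : IZR (px3 p) ^ 2 <= (R + 1) ^ 2).
          { assert (0 <= IZR (px1 p) ^ 2) by apply pow2_ge_0. assert (0 <= IZR (px2 p) ^ 2) by apply pow2_ge_0. lra. }
          assert (Ht' : - (R + 1) <= IZR (px3 p) <= R + 1) by (split; nra).
          split; nra.
        + intros p q [[_ [Hp1 Hp2]] Hkp] [[_ [Hq1 Hq2]] Hkq] Hf.
          destruct p as [[p1 p2] p3]. destruct q as [[q1 q2] q3]. simpl in Hf. inversion Hf; subst.
          f_equal. apply int_eq_of_close.
          rewrite <- Hkq in Hkp. unfold px3, T0, px1, px2 in *; simpl in *.
          pose proof (flr_le (IZR p3 - (ka - b1 * IZR q1 - b2 * IZR q2))).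
          pose proof (flr_gt (IZR p3 - (ka - b1 * IZR q1 - b2 * IZR q2))).
          pose proof (flr_le (IZR q3 - (ka - b1 * IZR q1 - b2 * IZR q2))).
          pose proof (flr_gt (IZR q3 - (ka - b1 * IZR q1 - b2 * IZR q2))).
          rewrite Hkp in H, H0. apply Rabs_def1; lra.
        + apply count_ellipse; auto. nra. }
  rewrite sm_const, S_INR, INR_IZR_INZ, HM.
  pose proof (flr_le L). apply Rmult_le_compat_r; lra.
Qed.

Definition dot (a p : Z3) : R :=
  IZR (px1 a) * IZR (px1 p) + IZR (px2 a) * IZR (px2 p) + IZR (px3 a) * IZR (px3 p).

Lemma abs_ratio x y : y <> 0 -> Rabs x <= Rabs y -> -1 <= x / y <= 1.
Proof.
  intros Hy H. assert (Habs : Rabs (x / y) <= 1).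
  { unfold Rdiv. rewrite Rabs_mult, Rabs_inv.
    assert (0 < Rabs y) by (apply Rabs_pos_lt; auto).
    unfold Rdiv. apply Rmult_le_reg_r with (Rabs y); auto. rewrite Rmult_assoc, Rinv_l by lra. lra. }
  revert Habs. unfold Rabs. destruct (Rcase_abs (x / y)); lra.
Qed.

Lemma count_slab3 a R klo W : 0 <= R -> 0 <= W ->
  Rabs (IZR (px1 a)) <= Rabs (IZR (px3 a)) -> Rabs (IZR (px2 a)) <= Rabs (IZR (px3 a)) ->
  IZR (px3 a) <> 0 ->
  cle (fun p => R ^ 2 <= sq3 p <= (R + 1) ^ 2 /\ klo <= dot a p <= klo + W)
      ((W / Rabs (IZR (px3 a)) + 1) * (122 * (R + 1))).
Proof.
  intros HR HW H1 H2 H3.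
  set (a1 := IZR (px1 a)) in *. set (a2 := IZR (px2 a)) in *. set (a3 := IZR (px3 a)) in *.
  set (b1 := a1 / a3). set (b2 := a2 / a3).
  pose proof (abs_ratio a1 a3 H3 H1) as Hb1. pose proof (abs_ratio a2 a3 H3 H2) as Hb2.
  fold b1 in Hb1. fold b2 in Hb2.
  assert (Hd : forall p, dot a p / a3 = IZR (px3 p) + b1 * IZR (px1 p) + b2 * IZR (px2 p)).
  { intros p. unfold dot, b1, b2. fold a1 a2 a3. field. auto. }
  destruct (Rlt_dec 0 a3) as [Hpos|Hneg].
  - rewrite Rabs_right by lra.
    assert (HL : 0 <= W / a3) by (unfold Rdiv; apply Rmult_le_pos; [lra|apply Rlt_le, Rinv_0_lt_compat; lra]).
    eapply cle_mono; [| apply Rle_refl | apply (count_core R b1 b2 (klo / a3) (W / a3) HR Hb1 Hb2 HL)].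
    intros p [Hs [Hk1 Hk2]]. split; auto.
    assert (klo / a3 <= dot a p / a3).
    { unfold Rdiv. apply Rmult_le_compat_r; [apply Rlt_le, Rinv_0_lt_compat; lra|lra]. }
    assert (dot a p / a3 <= (klo + W) / a3).
    { unfold Rdiv. apply Rmult_le_compat_r; [apply Rlt_le, Rinv_0_lt_compat; lra|lra]. }
    rewrite Hd in H, H0. replace ((klo + W) / a3) with (klo / a3 + W / a3) in H0 by (field; lra).
    lra.
  - assert (Hn : a3 < 0) by lra.
    rewrite Rabs_left by lra.
    assert (HL : 0 <= W / - a3) by (unfold Rdiv; apply Rmult_le_pos; [lra|apply Rlt_le, Rinv_0_lt_compat; lra]).
    eapply cle_mono; [| apply Rle_refl | apply (count_core R b1 b2 ((klo + W) / a3) (W / - a3) HR Hb1 Hb2 HL)].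
    intros p [Hs [Hk1 Hk2]]. split; auto.
    assert (Hi : / a3 <= 0) by (apply Rlt_le, Rinv_lt_0_compat; lra).
    assert ((klo + W) / a3 <= dot a p / a3).
    { unfold Rdiv. rewrite (Rmult_comm (klo + W)), (Rmult_comm (dot a p)). apply Rmult_le_compat_neg_l; lra. }
    assert (dot a p / a3 <= klo / a3).
    { unfold Rdiv. rewrite (Rmult_comm klo), (Rmult_comm (dot a p)). apply Rmult_le_compat_neg_l; lra. }
    rewrite Hd in H, H0. replace (klo / a3) with ((klo + W) / a3 + W / - a3) in H0 by (field; lra).
    lra.
Qed.

Lemma count_slab3' a R klo W : 0 <= R -> 0 <= W ->
  Rabs (IZR (px1 a)) <= Rabs (IZR (px3 a)) -> Rabs (IZR (px2 a)) <= Rabs (IZR (px3 a)) ->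
  IZR (px3 a) <> 0 ->
  cle (fun p => R ^ 2 <= sq3 p <= (R + 1) ^ 2 /\ klo <= dot a p <= klo + W)
      ((2 * W / sqrt (sq3 a) + 1) * (122 * (R + 1))).
Proof.
  intros HR HW H1 H2 H3.
  eapply cle_mono; [intros x Hx; exact Hx| | apply count_slab3; auto].
  apply Rmult_le_compat_r; [lra|].
  assert (Hp : 0 < Rabs (IZR (px3 a))) by (apply Rabs_pos_lt; auto).
  assert (Hs : sqrt (sq3 a) <= 2 * Rabs (IZR (px3 a))).
  { apply sqrt_le_lin; [lra|]. unfold sq3.
    rewrite <- (pow2_abs (IZR (px1 a))), <- (pow2_abs (IZR (px2 a))), <- (pow2_abs (IZR (px3 a))).
    pose proof (Rabs_pos (IZR (px1 a))). pose proof (Rabs_pos (IZR (px2 a))). nra. }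
  assert (Hs0 : 0 < sqrt (sq3 a)).
  { apply sqrt_lt_R0. unfold sq3. rewrite <- (pow2_abs (IZR (px3 a))).
    pose proof (pow2_ge_0 (IZR (px1 a))). pose proof (pow2_ge_0 (IZR (px2 a))). nra. }
  apply Rplus_le_compat_r. unfold Rdiv.
  rewrite Rmult_assoc. apply Rmult_le_reg_r with (Rabs (IZR (px3 a)) * sqrt (sq3 a)). nra.
  replace (W * / Rabs (IZR (px3 a)) * (Rabs (IZR (px3 a)) * sqrt (sq3 a))) with (W * sqrt (sq3 a)) by (field; lra).
  replace (2 * (W * / sqrt (sq3 a)) * (Rabs (IZR (px3 a)) * sqrt (sq3 a))) with (W * (2 * Rabs (IZR (px3 a)))) by (field; lra).
  apply Rmult_le_compat_l; auto.
Qed.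

Definition swap13 (p : Z3) : Z3 := ((px3 p, px2 p), px1 p).
Definition swap23 (p : Z3) : Z3 := ((px1 p, px3 p), px2 p).

Lemma count_slab a R klo W : 0 <= R -> 0 <= W -> a <> (0%Z, 0%Z, 0%Z) ->
  cle (fun p => R ^ 2 <= sq3 p <= (R + 1) ^ 2 /\ klo <= dot a p <= klo + W)
      ((2 * W / sqrt (sq3 a) + 1) * (122 * (R + 1))).
Proof.
  intros HR HW Ha.
  destruct a as [[a1 a2] a3].
  assert (Hnz : forall z : Z, Rabs (IZR z) = 0 -> z = 0%Z).
  { intros z Hz. apply eq_IZR. destruct (Req_dec (IZR z) 0); auto. exfalso.
    pose proof (Rabs_pos_lt _ H). lra. }
  assert (Hnz' : forall x y z : Z, Rabs (IZR x) <= Rabs (IZR z) -> Rabs (IZR y) <= Rabs (IZR z) ->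
            (x, y, z) <> (0%Z, 0%Z, 0%Z) \/ (z, y, x) <> (0%Z, 0%Z, 0%Z) \/ (x, z, y) <> (0%Z, 0%Z, 0%Z) -> IZR z <> 0).
  { intros x y z Hx Hy Hn Hz. rewrite Hz, Rabs_R0 in Hx, Hy.
    pose proof (Rabs_pos (IZR x)). pose proof (Rabs_pos (IZR y)).
    assert (x = 0%Z) by (apply Hnz; lra). assert (y = 0%Z) by (apply Hnz; lra).
    assert (z = 0%Z) by (apply eq_IZR; auto). subst. tauto. }
  destruct (Rle_dec (Rabs (IZR a1)) (Rabs (IZR a3))) as [h13|h13];
  destruct (Rle_dec (Rabs (IZR a2)) (Rabs (IZR a3))) as [h23|h23].
  - apply count_slab3'; simpl; auto. eapply (Hnz' a1 a2 a3); eauto; tauto.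
  -
    assert (h21 : Rabs (IZR a1) <= Rabs (IZR a2)) by lra.
    assert (h32 : Rabs (IZR a3) <= Rabs (IZR a2)) by lra.
    apply (cle_inj _ (fun p => R ^ 2 <= sq3 p <= (R + 1) ^ 2 /\ klo <= dot (a1, a3, a2) p <= klo + W) swap23).
    + intros [[p1 p2] p3]. unfold sq3, dot, swap23, px1, px2, px3; simpl. intros [[H1 H2] [H3 H4]].
      split; split; lra.
    + intros [[p1 p2] p3] [[q1 q2] q3] _ _. unfold swap23, px1, px2, px3; simpl. intros E; inversion E; auto.
    + replace (sq3 (a1, a2, a3)) with (sq3 (a1, a3, a2)) by (unfold sq3, px1, px2, px3; simpl; ring).
      apply count_slab3'; unfold px1, px2, px3; simpl; auto. eapply (Hnz' a1 a3 a2); eauto; tauto.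

  - assert (h31 : Rabs (IZR a3) <= Rabs (IZR a1)) by lra.
    assert (h21 : Rabs (IZR a2) <= Rabs (IZR a1)) by lra.
    apply (cle_inj _ (fun p => R ^ 2 <= sq3 p <= (R + 1) ^ 2 /\ klo <= dot (a3, a2, a1) p <= klo + W) swap13).
    + intros [[p1 p2] p3]. unfold sq3, dot, swap13, px1, px2, px3; simpl. intros [[H1 H2] [H3 H4]].
      split; split; lra.
    + intros [[p1 p2] p3] [[q1 q2] q3] _ _. unfold swap13, px1, px2, px3; simpl. intros E; inversion E; auto.
    + replace (sq3 (a1, a2, a3)) with (sq3 (a3, a2, a1)) by (unfold sq3, px1, px2, px3; simpl; ring).
      apply count_slab3'; unfold px1, px2, px3; simpl; auto. eapply (Hnz' a3 a2 a1); eauto; tauto.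
  - assert (h31 : Rabs (IZR a3) <= Rabs (IZR a1)) by lra.
    destruct (Rle_dec (Rabs (IZR a2)) (Rabs (IZR a1))) as [h21|h21].
    + apply (cle_inj _ (fun p => R ^ 2 <= sq3 p <= (R + 1) ^ 2 /\ klo <= dot (a3, a2, a1) p <= klo + W) swap13).
      * intros [[p1 p2] p3]. unfold sq3, dot, swap13, px1, px2, px3; simpl. intros [[H1 H2] [H3 H4]].
        split; split; lra.
      * intros [[p1 p2] p3] [[q1 q2] q3] _ _. unfold swap13, px1, px2, px3; simpl. intros E; inversion E; auto.
      * replace (sq3 (a1, a2, a3)) with (sq3 (a3, a2, a1)) by (unfold sq3, px1, px2, px3; simpl; ring).
        apply count_slab3'; unfold px1, px2, px3; simpl; auto. eapply (Hnz' a3 a2 a1); eauto; tauto.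
    + assert (h12 : Rabs (IZR a1) <= Rabs (IZR a2)) by lra.
      assert (h32 : Rabs (IZR a3) <= Rabs (IZR a2)) by lra.
      apply (cle_inj _ (fun p => R ^ 2 <= sq3 p <= (R + 1) ^ 2 /\ klo <= dot (a1, a3, a2) p <= klo + W) swap23).
      * intros [[p1 p2] p3]. unfold sq3, dot, swap23, px1, px2, px3; simpl. intros [[H1 H2] [H3 H4]].
        split; split; lra.
      * intros [[p1 p2] p3] [[q1 q2] q3] _ _. unfold swap23, px1, px2, px3; simpl. intros E; inversion E; auto.
      * replace (sq3 (a1, a2, a3)) with (sq3 (a1, a3, a2)) by (unfold sq3, px1, px2, px3; simpl; ring).
        apply count_slab3'; unfold px1, px2, px3; simpl; auto. eapply (Hnz' a1 a3 a2); eauto; tauto.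
Qed.

Lemma sq3_nonneg p : 0 <= sq3 p.
Proof. unfold sq3. pose proof (pow2_ge_0 (IZR (px1 p))). pose proof (pow2_ge_0 (IZR (px2 p))).
  pose proof (pow2_ge_0 (IZR (px3 p))). lra. Qed.

Lemma sq3_add a n : sq3 (z3add a n) = sq3 a + 2 * dot a n + sq3 n.
Proof. destruct a as [[a1 a2] a3]; destruct n as [[n1 n2] n3].
  unfold sq3, dot, z3add, px1, px2, px3; simpl. rewrite !plus_IZR. ring. Qed.

Lemma cauchy_schwarz a n : dot a n <= sqrt (sq3 a) * sqrt (sq3 n).
Proof.
  assert (H : dot a n ^ 2 <= sq3 a * sq3 n).
  { unfold dot, sq3.
    set (x1 := IZR (px1 a)); set (x2 := IZR (px2 a)); set (x3 := IZR (px3 a)).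
    set (y1 := IZR (px1 n)); set (y2 := IZR (px2 n)); set (y3 := IZR (px3 n)).
    assert ((x1^2+x2^2+x3^2)*(y1^2+y2^2+y3^2) - (x1*y1+x2*y2+x3*y3)^2 =
      (x1*y2-x2*y1)^2 + (x1*y3-x3*y1)^2 + (x2*y3-x3*y2)^2) by ring.
    pose proof (pow2_ge_0 (x1*y2-x2*y1)). pose proof (pow2_ge_0 (x1*y3-x3*y1)).
    pose proof (pow2_ge_0 (x2*y3-x3*y2)). lra. }
  rewrite <- sqrt_mult_alt by apply sq3_nonneg.
  destruct (Rle_dec (dot a n) 0). pose proof (sqrt_pos (sq3 a * sq3 n)); lra.
  rewrite <- (sqrt_pow2 (dot a n)) by lra. apply sqrt_le_1_alt; auto.
Qed.

Lemma shell_xi a R p w : a <> (0%Z, 0%Z, 0%Z) -> 0 <= R -> 0 <= w ->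
  cle (fun n => R ^ 2 <= sq3 n <= (R + 1) ^ 2 /\ p <= sqrt (1 + sq3 (z3add a n)) <= p + w)
      ((2 * (w * (sqrt (sq3 a) + R + 2) + R + 1 / 2) / sqrt (sq3 a) + 1) * (122 * (R + 1))).
Proof.
  intros Ha HR Hw.
  set (P := Rmax p 0). set (Na := sqrt (sq3 a)).
  eapply cle_mono; [| apply Rle_refl |
     apply (count_slab a R ((P ^ 2 - 1 - sq3 a - (R + 1) ^ 2) / 2) (w * (Na + R + 2) + R + 1 / 2)); auto].
  2:{ pose proof (sqrt_pos (sq3 a)). fold Na in H. nra. }
  intros n [[H1 H2] [H3 H4]]. split; [split; auto|].
  set (xi := sqrt (1 + sq3 (z3add a n))) in *.
  pose proof (sq3_nonneg n). pose proof (sq3_nonneg a). pose proof (sq3_nonneg (z3add a n)).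
  assert (Hxi2 : xi * xi = 1 + sq3 (z3add a n)) by (apply sqrt_sqrt; lra).
  assert (Hxi0 : 0 <= xi) by apply sqrt_pos.
  rewrite sq3_add in Hxi2.
  pose proof (cauchy_schwarz a n) as Hcs. fold Na in Hcs.
  assert (HNa2 : Na * Na = sq3 a) by (apply sqrt_sqrt; auto).
  assert (HNa0 : 0 <= Na) by apply sqrt_pos.
  set (Nn := sqrt (sq3 n)) in *.
  assert (HNn2 : Nn * Nn = sq3 n) by (apply sqrt_sqrt; auto).
  assert (HNn0 : 0 <= Nn) by apply sqrt_pos.
  assert (HNn : Nn <= R + 1) by (apply sqrt_le_lin; lra).
  assert (Hxib : xi <= Na + Nn + 1).
  { apply sqrt_le_lin; [lra|]. rewrite sq3_add. nra. }
  assert (HP0 : 0 <= P) by (unfold P, Rmax; destruct (Rle_dec p 0); lra).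
  assert (HPx : P <= xi) by (unfold P, Rmax; destruct (Rle_dec p 0); lra).
  assert (HPw : xi - P <= w) by (unfold P, Rmax; destruct (Rle_dec p 0); lra).
  assert (HxP : P * P <= xi * xi) by nra.
  assert (HxP2 : xi * xi - P * P <= 2 * w * (Na + R + 2)).
  { assert (xi * xi - P * P = (xi - P) * (xi + P)) by ring.
    assert ((xi - P) * (xi + P) <= w * (2 * xi)) by (apply Rmult_le_compat; lra).
    nra. }
  split; nra.
Qed.

Lemma final_nz c w N Na : 1 <= c -> 0 <= w -> 1 <= N -> 0 < Na ->
  (c * N + 1) * ((2 * (w * (Na + c * N + 2) + c * N + 1 / 2) / Na + 1) * (122 * (c * N + 1)))
  <= 2928 * c ^ 3 * (w + 1) * (N ^ 2 * (1 + N / Na)).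
Proof.
  intros Hc Hw HN HNa.
  assert (HcN : 1 <= c * N) by nra.
  set (X := N / Na).
  assert (HX : 0 <= X) by (unfold X, Rdiv; apply Rmult_le_pos; [lra|apply Rlt_le, Rinv_0_lt_compat; lra]).
  assert (E : 2 * (w * (Na + c * N + 2) + c * N + 1 / 2) / Na = 2 * w + 2 * (w * (c * N + 2) + c * N + 1 / 2) / N * X)
    by (unfold X; field; lra).
  rewrite E.
  assert (Hb : 2 * (w * (c * N + 2) + c * N + 1 / 2) / N <= 6 * c * (w + 1)).
  { apply Rmult_le_reg_r with N; [lra|]. unfold Rdiv. rewrite Rmult_assoc, Rinv_l by lra. nra. }
  assert (F1 : 2 * w + 2 * (w * (c * N + 2) + c * N + 1 / 2) / N * X + 1 <= 6 * c * (w + 1) * (1 + X)).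
  { assert (2 * (w * (c * N + 2) + c * N + 1 / 2) / N * X <= 6 * c * (w + 1) * X) by (apply Rmult_le_compat_r; auto).
    nra. }
  assert (F2 : (c * N + 1) * (122 * (c * N + 1)) <= 488 * c ^ 2 * N ^ 2) by nra.
  assert (P1 : 0 <= 2 * w + 2 * (w * (c * N + 2) + c * N + 1 / 2) / N * X + 1).
  { assert (0 <= 2 * (w * (c * N + 2) + c * N + 1 / 2) / N) by (unfold Rdiv; apply Rmult_le_pos; [nra|apply Rlt_le, Rinv_0_lt_compat; lra]).
    nra. }
  replace ((c * N + 1) * ((2 * w + 2 * (w * (c * N + 2) + c * N + 1 / 2) / N * X + 1) * (122 * (c * N + 1))))
    with ((2 * w + 2 * (w * (c * N + 2) + c * N + 1 / 2) / N * X + 1) * ((c * N + 1) * (122 * (c * N + 1)))) by ring.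
  apply Rle_trans with (6 * c * (w + 1) * (1 + X) * (488 * c ^ 2 * N ^ 2)).
  - apply Rmult_le_compat; auto. nra.
  - right. ring.
Qed.

Lemma min_bound A N : 1 <= A -> 1 <= N -> N ^ 2 * (1 + N / A) <= 2 * / Rmin A N * N ^ 3.
Proof.
  intros HA HN. unfold Rmin. destruct (Rle_dec A N).
  - assert (N ^ 2 <= / A * N ^ 3).
    { apply Rmult_le_reg_l with A; [lra|]. rewrite <- Rmult_assoc, Rinv_r by lra. nra. }
    assert (N ^ 2 * (N / A) = / A * N ^ 3) by (field; lra). nra.
  - assert (N ^ 2 * (N / A) <= N ^ 2).
    { rewrite <- (Rmult_1_r (N ^ 2)) at 2. apply Rmult_le_compat_l; [nra|]. apply Rmult_le_reg_r with A; [lra|]. unfold Rdiv.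
      rewrite Rmult_assoc, Rinv_l by lra. nra. }
    assert (2 * / N * N ^ 3 = 2 * N ^ 2) by (field; lra). nra.
Qed.

Lemma z3norm_eq n : z3norm n = sqrt (sq3 n).
Proof. destruct n as [[n1 n2] n3]. reflexivity. Qed.

Lemma jbr_eq n : jbr n = sqrt (1 + sq3 n).
Proof. unfold jbr. rewrite z3norm_eq, pow2_sqrt by apply sq3_nonneg. auto. Qed.

Definition zsq (n : Z3) : Z := (px1 n * px1 n + px2 n * px2 n + px3 n * px3 n)%Z.

Lemma zsq_IZR n : IZR (zsq n) = sq3 n.
Proof. unfold zsq, sq3. rewrite !plus_IZR, !mult_IZR. ring. Qed.

Lemma zsq_nonneg n : (0 <= zsq n)%Z.
Proof. unfold zsq. nia. Qed.

Lemma key_le n x : sqrt (sq3 n) <= x -> IZR (Z.sqrt (zsq n)) <= x.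
Proof.
  intros H. pose proof (Z.sqrt_spec (zsq n) (zsq_nonneg n)) as [H1 _].
  pose proof (Z.sqrt_nonneg (zsq n)).
  apply IZR_le in H1. rewrite mult_IZR, zsq_IZR in H1.
  assert (0 <= IZR (Z.sqrt (zsq n))) by (apply IZR_le; auto).
  eapply Rle_trans; [|exact H]. rewrite <- (sqrt_square (IZR (Z.sqrt (zsq n)))) by auto.
  apply sqrt_le_1_alt; auto.
Qed.

Lemma shell_of_key n j : Z.sqrt (zsq n) = (0 + Z.of_nat j)%Z ->
  INR j ^ 2 <= sq3 n <= (INR j + 1) ^ 2.
Proof.
  intros H. pose proof (Z.sqrt_spec (zsq n) (zsq_nonneg n)) as [H1 H2].
  rewrite H in H1, H2. simpl in H1, H2.
  apply IZR_le in H1. apply IZR_lt in H2. rewrite zsq_IZR in H1, H2.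
  rewrite mult_IZR in H1. rewrite mult_IZR, <- Z.add_1_r, plus_IZR in H2.
  rewrite INR_IZR_INZ. split; simpl; lra.
Qed.

Lemma le_sqrt_of_sq y x : 0 <= y -> y ^ 2 <= x -> y <= sqrt x.
Proof. intros Hy H. rewrite <- (sqrt_pow2 y Hy). apply sqrt_le_1_alt; auto. Qed.

Lemma abs_le_split x e : Rabs x <= e -> - e <= x <= e.
Proof. unfold Rabs. destruct (Rcase_abs x); intros; lra. Qed.

Theorem lemma4p15 :
  forall c c' : R, 1 <= c -> 0 < c' ->
  exists C : R, 0 < C /\
    forall (a : Z3) (A N : R) (s : R),
      1 <= A -> 1 <= N -> sim c (z3norm a) A -> (s = 1 \/ s = -1) ->
      forall m : Z,
        card_le (fun n : Z3 => sim c (z3norm n) N /\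
                   Rabs (jbr (z3add a n) + s * jbr n - IZR m) <= c')
                (C * / Rmin A N * N ^ 3).
Proof.
  intros c c' Hc Hc'.
  exists (6000 * c ^ 4 * (2 * c' + 2)). split.
  { assert (0 < c ^ 4) by (apply pow_lt; lra). nra. }
  intros a A N s HA HN Hsa Hs m.
  set (w := 2 * c' + 1).
  set (Sset := fun n : Z3 => sim c (z3norm n) N /\ Rabs (jbr (z3add a n) + s * jbr n - IZR m) <= c').
  change (cle Sset (6000 * c ^ 4 * (2 * c' + 2) * / Rmin A N * N ^ 3)).
  assert (HcN : 1 <= c * N) by nra.
  assert (Hnorm : forall n, Sset n -> sqrt (sq3 n) <= c * N).
  { intros n [[Hs1 Hs2] _]. rewrite <- z3norm_eq.
    destruct (Req_dec N 1) as [E|E]. rewrite E, Rmult_1_r. auto. apply Hs2 in E. lra. }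
  set (M := Z.to_nat (flr (c * N))).
  assert (HfM : (0 <= flr (c * N))%Z) by (apply int_le_flr; simpl; lra).
  assert (HM : INR M <= c * N) by (unfold M; rewrite INR_IZR_INZ, Z2Nat.id by auto; apply flr_le).
  assert (Hkey : forall n, Sset n -> (0 <= Z.sqrt (zsq n) <= 0 + Z.of_nat M)%Z).
  { intros n Hn. split. apply Z.sqrt_nonneg. unfold M. rewrite Z2Nat.id by auto. simpl.
    apply int_le_flr, key_le, Hnorm; auto. }
  assert (Hmin : 0 < Rmin A N) by (unfold Rmin; destruct (Rle_dec A N); lra).
  assert (Hdec : {a = (0%Z, 0%Z, 0%Z)} + {a <> (0%Z, 0%Z, 0%Z)}).
  { destruct a as [[a1 a2] a3]. destruct (Z.eq_dec a1 0), (Z.eq_dec a2 0), (Z.eq_dec a3 0);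
    subst; try (left; reflexivity); right; intro E; inversion E; auto. }
  destruct Hdec as [Ha0|Ha0].
  -
    assert (HA1 : A = 1).
    { destruct (Req_dec A 1) as [E|E]; auto. destruct Hsa as [_ Hsa]. apply Hsa in E.
      rewrite Ha0 in E. unfold z3norm in E.
      replace (IZR 0 ^ 2 + IZR 0 ^ 2 + IZR 0 ^ 2) with 0 in E by (simpl; ring). rewrite sqrt_0 in E.
      assert (0 < / c * A) by (apply Rmult_lt_0_compat; [apply Rinv_0_lt_compat|]; lra). lra. }
    assert (Hm1 : Rmin A N = 1) by (rewrite HA1; unfold Rmin; destruct (Rle_dec 1 N); lra).
    eapply cle_mono; [intros x Hx; exact Hx| |
      apply (fiber Sset (fun n => Z.sqrt (zsq n)) 0 M (fun j => (2 * INR j + 3) * (122 * (INR j + 1)))); auto].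
    2:{ intros j Hj.
        eapply cle_mono; [| | apply (count_core (INR j) 0 0 (- (INR j + 1)) (2 * INR j + 2))].
        - intros n [Hn Hk]. pose proof (shell_of_key n j Hk) as [H1 H2]. split; [split; auto|].
          assert (IZR (px3 n) ^ 2 <= (INR j + 1) ^ 2).
          { unfold sq3 in H2. pose proof (pow2_ge_0 (IZR (px1 n))). pose proof (pow2_ge_0 (IZR (px2 n))). lra. }
          pose proof (pos_INR j). split; nra.
        - right. ring.
        - apply pos_INR.
        - lra.
        - lra.
        - pose proof (pos_INR j); lra. }
    rewrite Hm1.
    apply Rle_trans with (sm (fun _ => (2 * (c * N) + 3) * (122 * (c * N + 1))) (S M)).
    { apply sm_le. intros j Hj. assert (INR j <= INR M) by (apply le_INR; lia).
      pose proof (pos_INR j). apply Rmult_le_compat; nra. }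
    rewrite sm_const, S_INR.
    assert (0 < c ^ 4) by (apply pow_lt; lra).
    assert (c ^ 3 <= c ^ 4) by (change (c ^ 4) with (c * c ^ 3); assert (0 < c ^ 3) by (apply pow_lt; lra); nra).
    assert ((INR M + 1) * ((2 * (c * N) + 3) * (122 * (c * N + 1))) <= 2440 * c ^ 3 * N ^ 3).
    { apply Rle_trans with ((2 * (c * N)) * ((5 * (c * N)) * (122 * (2 * (c * N))))).
      - pose proof (pos_INR M). apply Rmult_le_compat; try nra.
      - right. ring. }
    assert (0 < N ^ 3) by (apply pow_lt; lra).
    rewrite Rinv_1, Rmult_1_r.
    assert (c ^ 3 * N ^ 3 <= c ^ 4 * N ^ 3) by (apply Rmult_le_compat_r; lra).
    assert (0 <= c ^ 4 * N ^ 3) by (apply Rmult_le_pos; lra).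
    replace (6000 * c ^ 4 * (2 * c' + 2) * N ^ 3) with (6000 * (2 * c' + 2) * (c ^ 4 * N ^ 3)) by ring.
    replace (2440 * c ^ 3 * N ^ 3) with (2440 * (c ^ 3 * N ^ 3)) in H1 by ring.
    nra.
  -
    set (Na := sqrt (sq3 a)).
    assert (HNa : 0 < Na).
    { unfold Na. apply sqrt_lt_R0. destruct a as [[a1 a2] a3]. unfold sq3, px1, px2, px3; simpl.
      pose proof (pow2_ge_0 (IZR a1)). pose proof (pow2_ge_0 (IZR a2)). pose proof (pow2_ge_0 (IZR a3)).
      destruct (Req_dec (IZR a1 ^ 2 + IZR a2 ^ 2 + IZR a3 ^ 2) 0) as [E|E]; [|lra].
      exfalso. apply Ha0.
      assert (IZR a1 = 0) by nra. assert (IZR a2 = 0) by nra. assert (IZR a3 = 0) by nra.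
      apply eq_IZR in H2. apply eq_IZR in H3. apply eq_IZR in H4. subst. reflexivity. }
    eapply cle_mono; [intros x Hx; exact Hx| |
      apply (fiber Sset (fun n => Z.sqrt (zsq n)) 0 M
        (fun j => (2 * (w * (Na + INR j + 2) + INR j + 1 / 2) / Na + 1) * (122 * (INR j + 1)))); auto].
    2:{ intros j Hj. set (Rj := INR j).
        assert (HRj : 0 <= Rj) by apply pos_INR.
        assert (Hp : exists p, forall n, Sset n /\ Z.sqrt (zsq n) = (0 + Z.of_nat j)%Z ->
                     p <= sqrt (1 + sq3 (z3add a n)) <= p + w).
        { assert (Hh : sqrt (1 + (Rj + 1) ^ 2) <= sqrt (1 + Rj ^ 2) + 1).
          { apply sqrt_le_lin. pose proof (sqrt_pos (1 + Rj ^ 2)); lra.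
            assert (Rj <= sqrt (1 + Rj ^ 2)) by (apply le_sqrt_of_sq; lra).
            pose proof (pow2_sqrt (1 + Rj ^ 2) ltac:(nra)). nra. }
          destruct Hs as [Hs|Hs]; subst s.
          - exists (IZR m - c' - sqrt (1 + (Rj + 1) ^ 2)). intros n [[_ Habs] Hk].
            pose proof (shell_of_key n j Hk) as [H1 H2]. fold Rj in H1, H2.
            rewrite !jbr_eq in Habs. apply abs_le_split in Habs.
            assert (sqrt (1 + Rj ^ 2) <= sqrt (1 + sq3 n)) by (apply sqrt_le_1_alt; lra).
            assert (sqrt (1 + sq3 n) <= sqrt (1 + (Rj + 1) ^ 2)) by (apply sqrt_le_1_alt; lra).
            unfold w. lra.
          - exists (IZR m - c' + sqrt (1 + Rj ^ 2)). intros n [[_ Habs] Hk].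
            pose proof (shell_of_key n j Hk) as [H1 H2]. fold Rj in H1, H2.
            rewrite !jbr_eq in Habs. apply abs_le_split in Habs.
            assert (sqrt (1 + Rj ^ 2) <= sqrt (1 + sq3 n)) by (apply sqrt_le_1_alt; lra).
            assert (sqrt (1 + sq3 n) <= sqrt (1 + (Rj + 1) ^ 2)) by (apply sqrt_le_1_alt; lra).
            unfold w. lra. }
        destruct Hp as [p Hp].
        eapply cle_mono; [| apply Rle_refl | apply (shell_xi a Rj p w Ha0 HRj)].
        - intros n Hn. pose proof (shell_of_key n j (proj2 Hn)). split; auto.
        - unfold w; lra. }
    set (Bmax := (2 * (w * (Na + c * N + 2) + c * N + 1 / 2) / Na + 1) * (122 * (c * N + 1))).
    assert (Hw0 : 0 <= w) by (unfold w; lra).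
    assert (Hstep : forall R, 0 <= R -> R <= c * N ->
      (2 * (w * (Na + R + 2) + R + 1 / 2) / Na + 1) * (122 * (R + 1)) <= Bmax).
    { intros R HR0 HR1. unfold Bmax. apply Rmult_le_compat; try lra.
      - assert (0 <= 2 * (w * (Na + R + 2) + R + 1 / 2) / Na)
          by (unfold Rdiv; apply Rmult_le_pos; [nra|apply Rlt_le, Rinv_0_lt_compat; lra]). lra.
      - apply Rplus_le_compat_r. unfold Rdiv. apply Rmult_le_compat_r; [apply Rlt_le, Rinv_0_lt_compat; lra|]. nra. }
    assert (HB0 : 0 <= Bmax) by (pose proof (Hstep 0 ltac:(lra) ltac:(lra)); 
       assert (0 <= (2 * (w * (Na + 0 + 2) + 0 + 1 / 2) / Na + 1) * (122 * (0 + 1))); [apply Rmult_le_pos; [|lra]; 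
       assert (0 <= 2 * (w * (Na + 0 + 2) + 0 + 1 / 2) / Na) by (unfold Rdiv; apply Rmult_le_pos; [nra|apply Rlt_le, Rinv_0_lt_compat; lra]); lra | lra]).
    apply Rle_trans with (sm (fun _ => Bmax) (S M)).
    { apply sm_le. intros j Hj. apply Hstep. apply pos_INR.
      assert (INR j <= INR M) by (apply le_INR; lia). lra. }
    rewrite sm_const, S_INR.
    apply Rle_trans with ((c * N + 1) * Bmax) ; [apply Rmult_le_compat_r; lra|].
    unfold Bmax. eapply Rle_trans; [apply final_nz; auto|].
    assert (Hc4 : 0 < c ^ 3) by (apply pow_lt; lra).
    assert (HN3 : 0 < N ^ 3) by (apply pow_lt; lra).
    replace (w + 1) with (2 * c' + 2) by (unfold w; ring).
    destruct (Req_dec A 1) as [EA|EA].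
    + assert (HNa1 : 1 <= Na).
      { unfold Na. rewrite <- zsq_IZR. apply le_sqrt_of_sq; [lra|]. replace (1 ^ 2) with (IZR 1) by (simpl; ring).
        apply IZR_le. destruct a as [[a1 a2] a3]. unfold zsq, px1, px2, px3; simpl.
        destruct (Z.eq_dec a1 0), (Z.eq_dec a2 0), (Z.eq_dec a3 0); subst; try nia. exfalso; auto. }
      assert (Hm1 : Rmin A N = 1) by (rewrite EA; unfold Rmin; destruct (Rle_dec 1 N); lra).
      rewrite Hm1, Rinv_1, Rmult_1_r.
      assert (HX : N / Na <= N).
      { apply Rmult_le_reg_r with Na; [lra|]. unfold Rdiv. rewrite Rmult_assoc, Rinv_l by lra. nra. }
      assert (N ^ 2 * (1 + N / Na) <= 2 * N ^ 3).
      { assert (N ^ 2 * (1 + N / Na) <= N ^ 2 * (2 * N)) by (apply Rmult_le_compat_l; nra). nra. }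
      assert (c ^ 3 <= c ^ 4) by (change (c ^ 4) with (c * c ^ 3); nra).
      assert (0 <= N ^ 2 * (1 + N / Na)).
      { apply Rmult_le_pos; [nra|]. assert (0 <= N / Na) by (unfold Rdiv; apply Rmult_le_pos; [lra|apply Rlt_le, Rinv_0_lt_compat; lra]). lra. }
      set (Y := N ^ 2 * (1 + N / Na)) in *.
      assert (c ^ 3 * Y <= c ^ 4 * (2 * N ^ 3)) by (apply Rmult_le_compat; lra).
      replace (2928 * c ^ 3 * (2 * c' + 2) * Y) with ((2 * c' + 2) * (2928 * (c ^ 3 * Y))) by ring.
      replace (6000 * c ^ 4 * (2 * c' + 2) * N ^ 3) with ((2 * c' + 2) * (3000 * (c ^ 4 * (2 * N ^ 3)))) by ring.
      assert (0 <= c ^ 3 * Y) by (apply Rmult_le_pos; lra).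
      apply Rmult_le_compat_l; lra.
    + destruct Hsa as [_ Hsa]. apply Hsa in EA. rewrite z3norm_eq in EA. fold Na in EA.
      assert (HX : N / Na <= c * (N / A)).
      { apply Rmult_le_reg_r with Na; [lra|]. unfold Rdiv. rewrite Rmult_assoc, Rinv_l by lra.
        assert (c * (N * / A) * Na = N * (c * Na / A)) by (field; lra).
        rewrite H. assert (1 <= c * Na / A).
        { apply Rmult_le_reg_r with A; [lra|]. unfold Rdiv. rewrite Rmult_assoc, Rinv_l by lra.
          apply Rmult_le_reg_l with (/ c). apply Rinv_0_lt_compat; lra.
          replace (/ c * (c * Na * 1)) with Na by (field; lra). lra. }
        nra. }
      assert (HNA : 0 <= N / A) by (unfold Rdiv; apply Rmult_le_pos; [lra|apply Rlt_le, Rinv_0_lt_compat; lra]).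
      assert (H1 : N ^ 2 * (1 + N / Na) <= c * (N ^ 2 * (1 + N / A))).
      { assert (1 + N / Na <= c * (1 + N / A)) by nra.
        replace (c * (N ^ 2 * (1 + N / A))) with (N ^ 2 * (c * (1 + N / A))) by ring.
        apply Rmult_le_compat_l; nra. }
      pose proof (min_bound A N HA HN) as H2.
      assert (0 < / Rmin A N) by (apply Rinv_0_lt_compat; auto).
      set (Z := N ^ 2 * (1 + N / Na)) in *.
      set (Q := N ^ 2 * (1 + N / A)) in *.
      replace (6000 * c ^ 4 * (2 * c' + 2) * / Rmin A N * N ^ 3) with
        ((2 * c' + 2) * (3000 * c ^ 3 * (c * (2 * / Rmin A N * N ^ 3)))) by ring.
      replace (2928 * c ^ 3 * (2 * c' + 2) * Z) with ((2 * c' + 2) * (2928 * c ^ 3 * Z)) by ring.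
      apply Rmult_le_compat_l; [lra|].
      assert (Z <= c * (2 * / Rmin A N * N ^ 3)) by (apply Rle_trans with (c * Q); [auto| apply Rmult_le_compat_l; lra]).
      assert (0 <= Z) by (unfold Z; apply Rmult_le_pos; [nra| assert (0 <= N / Na) by (unfold Rdiv; apply Rmult_le_pos; [lra|apply Rlt_le, Rinv_0_lt_compat; lra]); lra]).
      nra.
Qed.
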